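(* Let $n = 8k+5$ with $k\ge 0$ an integer, and let $m \ge 4n-4$. Let $a,b$ be integers of different parity with $1\le a$, $a+2 < b$, and $b+2 \le m$. Then the permutation $(a,a+2)(b,b+2)\in S_m$ is a product of $n$-crossing permutations over $S_m$.
   Context: For integers $2\le n\le m$ and $1 \le j \le m-n+1$, the $n$-crossing permutation $\pi_j\in S_m$ is $\pi_j=(j,\,j+n-1)(j+1,\,j+n-2)\cdots$, i.e. the involution sending $i \mapsto 2j+n-1-i$ for $j\le i\le j+n-1$ and fixing all other elements of $\{1,\dots,m\}$. The $n$-crossing permutations over $S_m$ are $\pi_1,\dots,\pi_{m-n+1}$. (The permutations $(a,a+2)(b,b+2)$ in the claim are exactly the products of one even-string and one odd-string transposition $(i,i+2)$ that correspond to a pair of triple crossings on disjoint triples of consecutive strings.) *)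

(* Defs.v *)
(* Points of {1,...,m} are represented by 'I_m via i <-> i.+1. *)
From mathcomp Require Import all_boot all_fingroup.
Set Implicit Arguments. Unset Strict Implicit. Unset Printing Implicit Defensive.

Local Open Scope group_scope.

Definition crossing_nat (n j i : nat) : nat :=
  if (j <= i) && (i <= j + n - 1) then 2 * j + n - 1 - i else i.

Definition acts_as (m : nat) (s : 'S_m) (f : nat -> nat) : Prop :=
  forall i : 'I_m, (s i).+1 = f i.+1.

Definition is_crossing (n m : nat) (s : 'S_m) : Prop :=
  exists j : nat, [/\ 1 <= j, j <= m - n + 1 & acts_as s (crossing_nat n j)].

Definition crossing_product (n m : nat) (s : 'S_m) : Prop :=
  exists ps : seq 'S_m, (forall p, p \in ps -> is_crossing n p) /\
                        \prod_(p <- ps) p = s.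

Definition swap_nat (x y i : nat) : nat :=
  if i == x then y else if i == y then x else i.

(* Main.v *)
Require Import Defs.
From mathcomp Require Import all_boot all_fingroup.
From mathcomp Require Import zify.
Set Implicit Arguments. Unset Strict Implicit. Unset Printing Implicit Defensive.
Local Open Scope group_scope.

Definition tp {m} (x y : nat) : 'S_m.+1 := tperm (inord x) (inord y).

Variant tpv_spec m (x y : nat) (j : 'I_m.+1) : 'I_m.+1 -> Prop :=
 | TV1 (j' : 'I_m.+1) of nat_of_ord j = x & nat_of_ord j' = y : tpv_spec x y j j'
 | TV2 (j' : 'I_m.+1) of nat_of_ord j = y & nat_of_ord j <> x & nat_of_ord j' = x : tpv_spec x y j j'
 | TV3 (j' : 'I_m.+1) of nat_of_ord j <> x & nat_of_ord j <> y & nat_of_ord j' = nat_of_ord j : tpv_spec x y j j'.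

Lemma tpvP m x y (j : 'I_m.+1) : x <= m -> y <= m -> tpv_spec x y j (tp x y j).
Proof.
move=> hx hy; rewrite /tp; case: tpermP => [e|e|h1 h2].
- by apply: TV1; [rewrite e /= inordK | rewrite /= inordK].
- case: (eqVneq (val j) x) => [e'|ne].
    by apply: TV1 => //; rewrite /= inordK // -e'; rewrite e /= inordK.
  apply: TV2; [by rewrite e /= inordK | by move/eqP: ne | by rewrite /= inordK].
- apply: TV3 => // ee.
  + by apply: h1; apply/val_inj; rewrite /= inordK // -ee.
  + by apply: h2; apply/val_inj; rewrite /= inordK // -ee.
Qed.

Definition c3 {m} (a b c : nat) : 'S_m.+1 := tp a b * tp a c.

Ltac tpstep := match goal with |- context [?F ?j] => is_var j;
  lazymatch F with context [@tp _ ?x ?y] =>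
  case: (@tpvP _ x y j ltac:(assumption) ltac:(assumption)) => * end end.
Ltac pw := apply/permP => i; apply/val_inj => /=; rewrite /c3 ?permM ?perm1; have := ltn_ord i; move=> ?;
  repeat (tpstep; try (exfalso; congruence)); congruence.

Lemma c3_rot m a b c : a <= m -> b <= m -> c <= m -> a <> b -> b <> c -> a <> c ->
  c3 a b c = c3 b c a :> 'S_m.+1.
Proof. move=> *; pw. Qed.

Lemma c3_inv m a b c : a <= m -> b <= m -> c <= m -> a <> b -> b <> c -> a <> c ->
  (c3 a b c)^-1 = c3 a c b :> 'S_m.+1.
Proof. move=> *; apply/eqP; rewrite eq_invg_mul; apply/eqP; pw. Qed.

Lemma comm3 m a b c d e : a <= m -> b <= m -> c <= m -> d <= m -> e <= m ->
  a <> b -> a <> c -> a <> d -> a <> e -> b <> c -> b <> d -> b <> e -> c <> d -> c <> e -> d <> e ->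
  (c3 c d e)^-1 * (c3 a b c)^-1 * c3 c d e * c3 a b c = c3 a d c :> 'S_m.+1.
Proof.
move=> *; rewrite !c3_inv //; pw.
Qed.

Fixpoint rvo {m} (J h : nat) : 'S_m.+1 :=
  if h is h'.+1 then tp J (J + 2 * h) * rvo J.+1 h' else 1.

Ltac split_one := match goal with
 | |- context [?a == ?b] => lazymatch a with context [if _ then _ else _] => fail | _ =>
     lazymatch b with context [if _ then _ else _] => fail | _ => case: (@eqP _ a b) => /= ? end end
 | |- context [?a <= ?b] => lazymatch a with context [if _ then _ else _] => fail | _ =>
     lazymatch b with context [if _ then _ else _] => fail | _ => case: (leqP a b) => /= ? end end
end.
Ltac nsolve := repeat (split_one; try (exfalso; lia)); try lia.

Lemma rvo_val m J h (i : 'I_m.+1) : J + 2 * h <= m ->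
  nat_of_ord (rvo J h i) = if (J <= i) && (i <= J + 2 * h) then 2 * J + 2 * h - i else i.
Proof.
elim: h J i => [|h IH] J i hJ /=; first by rewrite perm1; nsolve.
rewrite permM IH; last by lia.
case: (@tpvP _ J (J + 2 * h.+1) i ltac:(lia) ltac:(lia)) => j' *; nsolve.
Qed.

Variant rvo_spec m (J h : nat) (j : 'I_m.+1) : 'I_m.+1 -> Prop :=
 | RV1 (j' : 'I_m.+1) of J <= nat_of_ord j <= J + 2 * h & nat_of_ord j' = 2 * J + 2 * h - j : rvo_spec J h j j'
 | RV2 (j' : 'I_m.+1) of ~~ (J <= nat_of_ord j <= J + 2 * h) & nat_of_ord j' = j : rvo_spec J h j j'.

Lemma rvoP m J h (j : 'I_m.+1) : J + 2 * h <= m -> rvo_spec J h j (rvo J h j).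
Proof.
move=> hJ; have := rvo_val j hJ; case: ifP => c e.
  by apply: RV1.
by apply: RV2; rewrite ?c.
Qed.

Ltac tpstepl := match goal with |- context [?F ?j] => is_var j;
  lazymatch F with
  | context [@tp _ ?x ?y] => case: (@tpvP _ x y j ltac:(lia) ltac:(lia)) => *
  | context [@rvo _ ?J ?h] => case: (@rvoP _ J h j ltac:(lia)) => *
  end end.
Ltac pwl := apply/permP => i; apply/val_inj => /=; rewrite /c3 ?permM ?perm1; have := ltn_ord i; move=> ?;
  repeat (tpstepl; try (exfalso; lia)); lia.

Lemma A_eq m h x : 2 <= h -> x + 2 * h + 2 <= m ->
  rvo x h * rvo x.+1 h * rvo x.+2 h * rvo x.+1 h = c3 x (x + 2 * h + 2) (x + 2 * h) :> 'S_m.+1.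
Proof. move=> *; pwl. Qed.


Definition Hset m h : {set 'S_m.+1} := [set rvo (nat_of_ord J) h | J : 'I_m.+1 & J + 2 * h <= m].

Lemma rvo_in m h J : J + 2 * h <= m -> rvo J h \in <<Hset m h>>.
Proof.
move=> hJ; apply: mem_gen; apply/imsetP; exists (inord J); first by rewrite inE inordK //; lia.
by rewrite inordK //; lia.
Qed.

Lemma rvo_cross m h J : J + 2 * h <= m -> is_crossing (2 * h + 1) (rvo J h : 'S_m.+1).
Proof.
move=> hJ; exists J.+1; split; first by [].
  by lia.
move=> i; rewrite rvo_val // /crossing_nat; nsolve.
Qed.

Lemma H_prod m h g : g \in <<Hset m h>> -> crossing_product (2 * h + 1) g.
Proof.
move/gen_prodgP => [n [c Hc ->]].
exists [seq c i | i <- index_enum 'I_n]; split; last by rewrite big_map.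
move=> p /mapP [i _ ->]; have /imsetP [J hJ ->] := Hc i.
by apply: rvo_cross; move: hJ; rewrite inE.
Qed.


Lemma rotH m h a b c : a <= m -> b <= m -> c <= m -> a <> b -> b <> c -> a <> c ->
  c3 a b c \in <<Hset m h>> -> c3 b c a \in <<Hset m h>>.
Proof. by move=> *; rewrite -c3_rot. Qed.

Lemma invH m h a b c : a <= m -> b <= m -> c <= m -> a <> b -> b <> c -> a <> c ->
  c3 a b c \in <<Hset m h>> -> c3 a c b \in <<Hset m h>>.
Proof. by move=> *; rewrite -c3_inv // groupV. Qed.

Lemma hA m h p q r : 2 <= h -> q = p + 2 * h + 2 -> r = p + 2 * h -> q <= m ->
  c3 p q r \in <<Hset m h>>.
Proof.
move=> h2 -> -> hq; rewrite -A_eq //.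
by rewrite !groupM // rvo_in //; lia.
Qed.

Lemma comm3H m h a b c d e : a <= m -> b <= m -> c <= m -> d <= m -> e <= m ->
  a <> b -> a <> c -> a <> d -> a <> e -> b <> c -> b <> d -> b <> e -> c <> d -> c <> e -> d <> e ->
  c3 a b c \in <<Hset m h>> -> c3 c d e \in <<Hset m h>> -> c3 a d c \in <<Hset m h>>.
Proof. move=> *; rewrite -(@comm3 m a b c d e) //; apply: groupM; [apply: groupM; [apply: groupM|]|]; rewrite ?groupV //. Qed.

Lemma hB m h p q r : 2 <= h -> q = p + 2 -> r = p + 2 * h + 2 -> p + 2 * h + 4 <= m ->
  c3 p q r \in <<Hset m h>>.
Proof.
move=> h2 -> -> hq.
apply: (@comm3H m h p (p + 2 * h) (p + 2 * h + 2) (p + 2) (p + 2 * h + 4)); try lia.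
  apply: invH; try lia; apply: hA; lia.
apply: rotH; try lia; apply: rotH; try lia; apply: hA; lia.
Qed.

Lemma hClow m h x : 2 <= h -> x + 2 * h + 6 <= m -> c3 x (x + 4) (x + 2) \in <<Hset m h>>.
Proof.
move=> h2 hx.
apply: (@comm3H m h x (x + 2 * h + 2) (x + 2) (x + 4) (x + 2 * h + 4)); try lia.
  apply: invH; try lia; apply: hB; lia.
apply: hB; lia.
Qed.

Lemma hChigh m h x : 2 <= h -> x + 2 * h + 4 <= m ->
  c3 (x + 2 * h) (x + 2 * h + 4) (x + 2 * h + 2) \in <<Hset m h>>.
Proof.
move=> h2 hx.
apply: (@comm3H m h (x + 2 * h) x (x + 2 * h + 2) (x + 2 * h + 4) (x + 2)); try lia.
  apply: rotH; try lia; apply: rotH; try lia; apply: hA; lia.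
apply: rotH; try lia; apply: invH; try lia; apply: hA; lia.
Qed.

Lemma hC m h c : 2 <= h -> 4 * h + 6 <= m -> c + 4 <= m -> c3 c (c + 4) (c + 2) \in <<Hset m h>>.
Proof.
move=> h2 hm hc; case: (leqP (2 * h) c) => hc2.
  have e : c = (c - 2 * h) + 2 * h by lia.
  rewrite e; apply: hChigh => //; lia.
by apply: hClow; lia.
Qed.


Definition sw {m} (x : nat) : 'S_m.+1 := tp x (x + 2).

Lemma ss_c3 m c : c + 4 <= m -> sw c * sw (c + 2) = c3 c (c + 4) (c + 2) :> 'S_m.+1.
Proof. move=> *; rewrite /sw; pwl. Qed.

Lemma tp_inv m x y : (tp x y : 'S_m.+1)^-1 = tp x y.
Proof. exact: tpermV. Qed.

Lemma tp2 m x y : (tp x y : 'S_m.+1) * tp x y = 1.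
Proof. exact: tperm2. Qed.

Lemma chain2 (gT : finGroupType) (a b c : gT) : b * b = 1 -> a * c = (a * b) * (b * c).
Proof. by move=> bb; rewrite mulgA -(mulgA a) bb mulg1. Qed.

Lemma L1 m h x y : 2 <= h -> 4 * h + 6 <= m -> odd x = odd y -> x + 2 <= m -> y + 2 <= m ->
  sw x * sw y \in <<Hset m h>>.
Proof.
move=> h2 hm pxy hx hy.
wlog le : x y pxy hx hy / x <= y.
  move=> W; case: (leqP x y) => c; first exact: W.
  have := W y x (esym pxy) hy hx (ltnW c).
  by rewrite -groupV invMg /sw !tp_inv.
have [t ey] : exists t, y = x + 2 * t.
  exists ((y - x) %/ 2); have : x %% 2 = y %% 2 by rewrite !modn2 pxy.
  lia.
subst y; clear pxy le.
elim: t hy => [|t IH] hy; first by rewrite addn0 /sw tp2 group1.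
have -> : x + 2 * t.+1 = x + 2 * t + 2 by lia.
rewrite (@chain2 _ _ (sw (x + 2 * t))); last exact: tp2.
apply: groupM; first by apply: IH; lia.
rewrite ss_c3; last lia.
apply: hC => //; lia.
Qed.


Lemma gl1 (gT : finGroupType) (u T v : gT) : (u * v) * (T * v)^-1 * (u * v) = u * T^-1 * u * v.
Proof. by rewrite invMg !mulgA mulgK. Qed.

Lemma gl2 (gT : finGroupType) (A B s : gT) : (A * s) * (B * s)^-1 = A * B^-1.
Proof. by rewrite invMg mulgA mulgK. Qed.

Lemma par a b : a %% 2 = b %% 2 -> odd a = odd b.
Proof. by rewrite !modn2; case: (odd a); case: (odd b). Qed.

Lemma par' a b : odd a = odd b -> a %% 2 = b %% 2.
Proof. by rewrite !modn2 => ->. Qed.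

Lemma L2 m h t : 2 <= h -> 4 * h + 6 <= m -> forall x y z, y = x + 2 * t + 2 ->
  odd z = odd x -> y <= m -> z + 2 <= m -> tp x y * sw z \in <<Hset m h>>.
Proof.
move=> h2 hm; elim: t => [|t IH] x y z -> pz hy hz; have pz' := par' pz.
  have -> : x + 2 * 0 + 2 = x + 2 by lia.
  by apply: (@L1 m h x z) => //; lia.
have -> : (tp x (x + 2 * t.+1 + 2) : 'S_m.+1) = sw (x + 2 * t + 2) * tp x (x + 2 * t + 2) * sw (x + 2 * t + 2).
  rewrite /sw; pwl.
rewrite -[tp x (x + 2 * t + 2)]tp_inv -gl1.
apply: groupM; first apply: groupM.
- by apply: L1 => //; try lia; apply: par; lia.
- by rewrite groupV; apply: IH => //; lia.
- by apply: L1 => //; try lia; apply: par; lia.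
Qed.

Lemma L3 m h t u : 2 <= h -> 4 * h + 6 <= m -> forall x y z w, y = x + 2 * t + 2 -> w = z + 2 * u + 2 ->
  odd z = odd x -> y <= m -> w <= m -> tp x y * tp z w \in <<Hset m h>>.
Proof.
move=> h2 hm x y z w ey ew pz hy hw.
rewrite -[tp z w]tp_inv -(gl2 _ _ (sw x)).
apply: groupM; first by apply: (L2 (t := t)) => //; lia.
by rewrite groupV; apply: (L2 (t := u)) => //; lia.
Qed.


Lemma tp_comm m x y z w : x <= m -> y <= m -> z <= m -> w <= m ->
  x <> z -> x <> w -> y <> z -> y <> w ->
  tp x y * tp z w = tp z w * tp x y :> 'S_m.+1.
Proof. move=> *; pw. Qed.

Lemma g_can (gT : finGroupType) (a b X : gT) : a * b = b * a -> a * a = 1 -> X * a * b * a = X * b.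
Proof. by move=> ab aa; rewrite -!mulgA -ab [a * (a * b)]mulgA aa mul1g. Qed.

Lemma g_sw (gT : finGroupType) (a b X : gT) : a * b = b * a -> X * a * b = X * b * a.
Proof. by move=> ab; rewrite -!mulgA ab. Qed.

Lemma Qstep_g (gT : finGroupType) (H : {group gT}) (T0 T1 T2 T3 R s0 s1 s4 s5 : gT) :
  R * s4 * s5 \in H -> T0 * T2 \in H -> T1 * T3 \in H -> s4 * s0 \in H -> s5 * s1 \in H ->
  T1 * T2 = T2 * T1 -> s5 * s0 = s0 * s5 -> s4 * s5 = s5 * s4 -> s4 * s4 = 1 -> s5 * s5 = 1 ->
  T0 * (T1 * (T2 * (T3 * R))) * s0 * s1 \in H.
Proof.
move=> hR h02 h13 h40 h51 c12 c50 c45 s44 s55.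
have -> : T0 * (T1 * (T2 * (T3 * R))) * s0 * s1 = (T0 * T2) * (T1 * T3) * (R * s4 * s5) * ((s4 * s0) * (s5 * s1)).
  rewrite !mulgA (g_can _ c45 s44) (g_can _ c50 s55).
  by rewrite (g_sw _ c12).
by apply: groupM; [apply: groupM; [apply: groupM|]| apply: groupM].
Qed.

Lemma Qbase_g (gT : finGroupType) (H : {group gT}) (T0 T1 s0 s1 : gT) :
  T0 * s0 \in H -> T1 * s1 \in H -> T1 * s0 = s0 * T1 -> T0 * (T1 * 1) * s0 * s1 \in H.
Proof.
move=> h0 h1 c; rewrite mulg1.
have -> : T0 * T1 * s0 * s1 = (T0 * s0) * (T1 * s1) by rewrite -(mulgA T0 T1 s0) c !mulgA.
exact: groupM.
Qed.


Lemma Q m hH : 2 <= hH -> 4 * hH + 6 <= m -> forall k J, J + 2 * (4 * k + 2) <= m ->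
  rvo J (4 * k + 2) * sw J * sw (J + 1) \in <<Hset m hH>>.
Proof.
move=> h2 hm; elim => [|k IH] J hJ.
  have -> : 4 * 0 + 2 = 2 by [].
  rewrite /=; apply: Qbase_g.
  - by apply: (L3 (t := 1) (u := 0)) => //; lia.
  - by apply: (L3 (t := 0) (u := 0)) => //; try lia; apply: par; lia.
  - by apply: tp_comm; lia.
have -> : 4 * k.+1 + 2 = (4 * k + 2).+4 by lia.
rewrite /=; apply: (@Qstep_g _ _ _ _ _ _ _ _ _ (sw (J + 4)) (sw (J + 5))).
- have -> : J.+4 = J + 4 by lia.
  have -> : J + 5 = J + 4 + 1 by lia.
  by apply: IH; lia.
- by apply: (L3 (t := 4 * k + 5) (u := 4 * k + 3)) => //; try lia; apply: par; lia.
- by apply: (L3 (t := 4 * k + 4) (u := 4 * k + 2)) => //; try lia; apply: par; lia.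
- by apply: (L3 (t := 0) (u := 0)) => //; try lia; apply: par; lia.
- by apply: (L3 (t := 0) (u := 0)) => //; try lia; apply: par; lia.
- by apply: tp_comm; lia.
- by apply: tp_comm; lia.
- by apply: tp_comm; lia.
- exact: tp2.
- exact: tp2.
Qed.


Lemma ms_lem m a b (s : 'S_m.+1) : 1 <= a -> a + 2 < b -> b + 2 <= m.+1 -> 
  acts_as s (fun i => swap_nat a (a + 2) (swap_nat b (b + 2) i)) ->
  s = sw (a - 1) * sw (b - 1) :> 'S_m.+1.
Proof.
move=> ha hab2 hb hs.
  apply/permP => i; apply/val_inj => /=; rewrite /sw permM.
  have := ltn_ord i; move: (hs i); rewrite /swap_nat => e ?.
  repeat (tpstepl; try (exfalso; lia)); move: e; nsolve.
Qed.


Lemma Mixed m hH : 2 <= hH -> 4 * hH + 6 <= m -> sw 0%N * sw 1%N \in <<Hset m hH>> ->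
  forall x y, (x %% 2 = 0)%N -> (y %% 2 = 1)%N -> x + 2 <= m -> y + 2 <= m ->
  sw x * sw y \in <<Hset m hH>>.
Proof.
move=> h2 hm h01 x y px py hx hy.
rewrite (@chain2 _ _ (sw 0%N)); last exact: tp2.
rewrite (@chain2 _ (sw 0%N) (sw 1%N)); last exact: tp2.
apply: groupM; first by apply: L1 => //; try lia; apply: par; lia.
apply: groupM => //.
by apply: L1 => //; try lia; apply: par; lia.
Qed.



Lemma h01_lem m k : 4 * (4 * k + 2) + 6 <= m -> sw 0%N * sw 1%N \in <<Hset m (4 * k + 2)>>.
Proof.
move=> hm'.
  have h2 : 2 <= 4 * k + 2 by lia.
  have := @Q m (4 * k + 2) h2 hm' k 0 ltac:(lia).
  have := @rvo_in m (4 * k + 2) 0 ltac:(lia) => hr hq.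
  rewrite add0n in hq.
  rewrite -(mulKg (rvo 0 (4 * k + 2)) (sw 0%N * sw 1%N)).
  by apply: groupM; [rewrite groupV | rewrite mulgA].
Qed.

Local Close Scope group_scope.

Lemma fin_lem m k a b : 4 * (4 * k + 2) + 6 <= m -> (a - 1) %% 2 <> (b - 1) %% 2 ->
  a + 1 <= m -> b + 1 <= m -> 1 <= a -> 1 <= b ->
  (sw (a - 1) * sw (b - 1))%g \in <<Hset m (4 * k + 2)>>%g.
Proof.
move=> hm' pab h1 h2 h3 h4.
have h01 := h01_lem hm'.
case: (eqVneq ((a - 1) %% 2) 0) => pa.
  by apply: Mixed => //; lia.
rewrite tp_comm; try lia.
by apply: Mixed => //; lia.
Qed.


Theorem lemma4p6 (k m a b : nat) (s : 'S_m) :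
  4 * (8 * k + 5) - 4 <= m ->
  odd a != odd b ->
  1 <= a -> a + 2 < b -> b + 2 <= m ->
  acts_as s (fun i => swap_nat a (a + 2) (swap_nat b (b + 2) i)) ->
  crossing_product (8 * k + 5) s.
Proof.
case: m s => [|m] s hm hab ha hab2 hb hs; first by lia.
have hm' : 4 * (4 * k + 2) + 6 <= m by lia.
have pab : (a - 1) %% 2 <> (b - 1) %% 2.
  move=> e; have e2 : odd a = odd b by apply: par; lia.
  by move: hab; rewrite e2 eqxx.
have -> : 8 * k + 5 = 2 * (4 * k + 2) + 1 by lia.
apply: H_prod; rewrite (ms_lem ha hab2 hb hs).
apply: fin_lem => //; lia.
Qed.
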